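(* For no $\lambda\in\mathbb{C}$ does the equation $-w''(x)+P(x)w(x)=\lambda w(x)$ on $(0,\infty)$ have a nonzero solution $w\in L^2(0,\infty)$. In particular the self-adjoint operator $A=-\frac{d^2}{dx^2}+P(x)$ on $L^2(0,\infty)$, with domain $\{w\in L^2(0,\infty): w,w'\text{ locally absolutely continuous},\ Aw\in L^2(0,\infty)\}$, has no eigenvalues.
   Context: $P(x)=\dfrac{e^{4x}+10e^{2x}+1}{4(e^{2x}-1)^2}$ for $x>0$. *)

(* Defs.v *)
From Stdlib Require Import Reals.
Open Scope R_scope.

Definition P (x : R) : R :=
  (exp (4 * x) + 10 * exp (2 * x) + 1) / (4 * (exp (2 * x) - 1) ^ 2).

(* A complex-valued function w = u + i v on (0,oo) is represented by its real
   and imaginary parts u, v : R -> R (values outside (0,oo) are irrelevant).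
   For a continuous w, w ∈ L^2(0,oo) iff the Riemann integrals of |w|^2 over
   all compact subintervals [lo,hi] of (0,oo) are uniformly bounded. *)
Definition L2_pos (u v : R -> R) : Prop :=
  exists M : R, forall (lo hi : R)
    (pr : Riemann_integrable (fun x => u x ^ 2 + v x ^ 2) lo hi),
    0 < lo -> lo <= hi -> RiemannInt pr <= M.

(* Main.v *)
Require Import Defs.
From Stdlib Require Import Reals Lra Psatz Classical.
From Coquelicot Require Import Coquelicot.
Open Scope R_scope.


Lemma incr (f df : R -> R) p q : p <= q ->
  (forall t, p <= t <= q -> is_derive f t (df t)) ->
  (forall t, p <= t <= q -> 0 <= df t) -> f p <= f q.
Proof.
intros Hpq Hd Hn. destruct (Req_dec p q) as [->|Hne]; [lra|].
destruct (MVT_cor2 f df p q) as [c [Hc1 Hc2]]; [lra| |].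
- intros c Hc. apply is_derive_Reals. apply Hd; lra.
- assert (0 <= df c) by (apply Hn; lra). nra.
Qed.

Lemma le_eps A B : (forall e, 0 < e -> A <= e + B) -> A <= B.
Proof.
intros H. destruct (Rle_dec A B) as [h|h]; [auto|].
specialize (H ((A - B)/2)). lra.
Qed.

Lemma prim (f : R -> R) p t : 0 < p -> 0 < t -> (forall y, 0 < y -> continuous f y) ->
  is_derive (fun X => RInt f p X) t (f t).
Proof.
intros Hp Ht Hc. apply (is_derive_RInt f (fun X => RInt f p X) p); [|apply Hc; lra].
assert (Hpos : 0 < Rmin p t / 2) by (apply Rmin_case; lra).
exists (mkposreal (Rmin p t / 2) Hpos). intros y Hy. apply (@RInt_correct R_CompleteNormedModule).
apply ex_RInt_continuous. intros z Hz. apply Hc.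
unfold ball in Hy; simpl in Hy; unfold AbsRing_ball, abs, minus, plus, opp in Hy; simpl in Hy.
apply Rabs_lt_between in Hy.
revert Hz. unfold Rmin, Rmax. pose proof (Rmin_l p t). pose proof (Rmin_r p t).
destruct (Rle_dec p y); lra.
Qed.


Lemma exp_le_exp x y : x <= y -> exp x <= exp y.
Proof. intros [h|h]; [left; apply exp_increasing; auto|subst; lra]. Qed.

Lemma sh_nonneg x : 0 <= x -> 0 <= sinh x.
Proof. intros. unfold sinh. assert (exp (-x) <= exp x) by (apply exp_le_exp; lra). lra. Qed.
Lemma sh_pos x : 0 < x -> 0 < sinh x.
Proof. intros. unfold sinh. assert (exp (-x) < exp x) by (apply exp_increasing; lra). lra. Qed.
Lemma ch_sh x : cosh x ^ 2 = 1 + sinh x ^ 2.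
Proof.
unfold cosh, sinh. assert (H : exp x * exp (-x) = 1) by (rewrite <- exp_plus; replace (x + - x) with 0 by ring; apply exp_0).
nra.
Qed.
Lemma ch_ge1 x : 1 <= cosh x.
Proof. pose proof (ch_sh x). unfold cosh in *. pose proof (exp_pos x). pose proof (exp_pos (-x)). nra. Qed.
Lemma sh_ge x : 0 <= x -> x <= sinh x.
Proof.
intros Hx. pose proof (incr (fun t => sinh t - t) (fun t => cosh t - 1) 0 x Hx) as H.
simpl in H. rewrite sinh_0 in H.
assert (0 - 0 <= sinh x - x); [|lra]. apply H.
- intros t _. auto_derive; auto. ring.
- intros t _. pose proof (ch_ge1 t). lra.
Qed.
Lemma ch_le2 x : 0 <= x <= 1 -> cosh x <= 2.
Proof.
intros Hx. apply Rle_trans with (cosh 1).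
- apply (incr cosh sinh x 1); [lra| |].
  + intros t _. apply is_derive_Reals, derivable_pt_lim_cosh.
  + intros t Ht. apply sh_nonneg; lra.
- unfold cosh. pose proof exp_le_3. assert (exp (Ropp 1) <= 1).
  { apply Rle_trans with (exp 0); [apply exp_le_exp; lra|rewrite exp_0; lra]. } lra.
Qed.
Lemma sh_le x : 0 <= x <= 1 -> sinh x <= 2 * x.
Proof.
intros Hx. pose proof (incr (fun t => 2 * t - sinh t) (fun t => 2 - cosh t) 0 x) as H.
simpl in H. rewrite sinh_0 in H.
assert (2 * 0 - 0 <= 2 * x - sinh x); [|lra]. apply H; [lra| |].
- intros t _. auto_derive; auto. ring.
- intros t Ht. pose proof (ch_le2 t). lra.
Qed.

Lemma P_eq x : x <> 0 -> P x = 1/4 + 3 / (4 * sinh x ^ 2).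
Proof.
intros Hx. unfold P, sinh.
assert (E2 : exp (2 * x) = exp x * exp x) by (rewrite <- exp_plus; f_equal; ring).
assert (E4 : exp (4 * x) = (exp x * exp x) * (exp x * exp x)) by (rewrite <- !exp_plus; f_equal; ring).
assert (Em : exp (- x) = / exp x) by apply exp_Ropp.
assert (Hne : exp x * exp x - 1 <> 0).
{ intro Hc. rewrite <- E2 in Hc. assert (Hh : exp (2*x) = exp 0) by (rewrite exp_0; lra).
  apply exp_inv in Hh. lra. }
rewrite E2, E4, Em.
pose proof (exp_pos x) as Hp.
set (e := exp x) in *. clearbody e.
assert (Hd : e - / e <> 0).
{ intro Hc. apply Hne. replace (e * e - 1) with (e * (e - / e)) by (field; lra). rewrite Hc. ring. }
field. lra.
Qed.

Lemma P_pos x : 0 < x -> 0 < P x.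
Proof. intros. rewrite P_eq by lra. pose proof (sh_pos x H). apply Rplus_lt_le_0_compat; [lra|].
apply Rlt_le, Rdiv_lt_0_compat; nra. Qed.

Lemma P_der x : 0 < x -> is_derive P x (- 3 * cosh x / (2 * sinh x ^ 3)).
Proof.
intros Hx. apply is_derive_ext_loc with (fun t => 1/4 + 3 / (4 * sinh t ^ 2)).
- exists (mkposreal x Hx). intros y Hy. symmetry. apply P_eq.
  unfold ball in Hy; simpl in Hy; unfold AbsRing_ball, abs, minus, plus, opp in Hy; simpl in Hy.
  apply Rabs_lt_between in Hy. lra.
- pose proof (sh_pos x Hx). auto_derive.
  + assert (0 < sinh x * (sinh x * 1)) by nra. lra.
  + field. lra.
Qed.


Definition Hy (a b : R) (u v u1 v1 u2 v2 : R -> R) := forall x, 0 < x ->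
  is_derive u x (u1 x) /\ is_derive u1 x (u2 x) /\ is_derive v x (v1 x) /\
  is_derive v1 x (v2 x) /\ u2 x = (P x - a) * u x + b * v x /\
  v2 x = (P x - a) * v x - b * u x.

Lemma der_u (f : R -> R) x l : is_derive f x l -> Derive (fun t => f t) x = l.
Proof. intros H. apply is_derive_unique. exact H. Qed.
Ltac rw_der := repeat match goal with
  | H : is_derive ?f ?x ?l |- _ => progress rewrite (der_u f x l H) end.
Ltac ex_der := repeat match goal with
  | |- _ /\ _ => split
  | |- True => exact I
  | H : is_derive ?f ?x ?l |- ex_derive (fun t => ?f t) ?x => exists l; exact H
  | H : is_derive ?f ?x ?l |- ex_derive ?f ?x => exists l; exact H
  end.
Ltac dsolve := auto_derive; [ex_der | rw_der].

Definition Rf (u v : R -> R) x := u x ^ 2 + v x ^ 2.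
Definition Df (u v u1 v1 : R -> R) x := 2 * (u x * u1 x + v x * v1 x).
Definition D2f a (u v u1 v1 : R -> R) x :=
  2 * (u1 x ^ 2 + v1 x ^ 2) + 2 * (P x - a) * (u x ^ 2 + v x ^ 2).
Definition Jf (u v u1 v1 : R -> R) x := u x * v1 x - v x * u1 x.
Definition Ef a (u v u1 v1 : R -> R) x := u1 x ^ 2 + v1 x ^ 2 + (a - P x) * (u x ^ 2 + v x ^ 2).

Lemma derivs a b u v u1 v1 u2 v2 : Hy a b u v u1 v1 u2 v2 -> forall x, 0 < x ->
  is_derive (Rf u v) x (Df u v u1 v1 x) /\
  is_derive (Df u v u1 v1) x (D2f a u v u1 v1 x) /\
  is_derive (Jf u v u1 v1) x (- b * Rf u v x) /\
  (b = 0 -> is_derive (Ef a u v u1 v1) x (3 * cosh x / (2 * sinh x ^ 3) * Rf u v x)).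
Proof.
intros H x Hx. destruct (H x Hx) as (Hu & Hu1 & Hv & Hv1 & E1 & E2).
pose proof (P_der x Hx) as HP.
unfold Rf, Df, D2f, Jf, Ef. split; [|split; [|split]].
- dsolve. ring.
- dsolve. rewrite E1, E2. ring.
- dsolve. rewrite E1, E2. ring.
- intros ->. dsolve. rewrite E1, E2. field. pose proof (sh_pos x Hx). lra.
Qed.


Definition qf x := sqrt (sinh x).
Definition Gf (u : R -> R) x := qf x * u x.
Definition Mf (u u1 : R -> R) x := u1 x / qf x + cosh x * u x / (2 * qf x ^ 3).

Lemma qf_facts x : 0 < x -> 0 < qf x /\ qf x * qf x = sinh x.
Proof. intros Hx. pose proof (sh_pos x Hx). unfold qf. split.
apply sqrt_lt_R0; auto. apply sqrt_sqrt; lra. Qed.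

Ltac qalg x Hx :=
  let Hq0 := fresh in let Hq := fresh in
  destruct (qf_facts x Hx) as [Hq0 Hq]; unfold qf in Hq0, Hq;
  let q := fresh "q" in set (q := sqrt (sinh x)) in *; clearbody q; rewrite <- Hq in *.

Lemma gm_der1 a b u v u1 v1 u2 v2 : Hy a b u v u1 v1 u2 v2 -> forall x, 0 < x ->
  is_derive (Gf u) x (sinh x * Mf u u1 x) /\ is_derive (Gf v) x (sinh x * Mf v v1 x).
Proof.
intros H x Hx. destruct (H x Hx) as (Hu & Hu1 & Hv & Hv1 & E1 & E2).
pose proof (sh_pos x Hx) as Hs.
unfold Gf, Mf, qf. split.
- dsolve; [auto|]. qalg x Hx. field. lra.
- dsolve; [auto|]. qalg x Hx. field. lra.
Qed.

Lemma gm_der2 a b u v u1 v1 u2 v2 : Hy a b u v u1 v1 u2 v2 -> forall x, 0 < x ->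
  is_derive (Mf u u1) x (- (a * Gf u x - b * Gf v x) / sinh x).
Proof.
intros H x Hx. destruct (H x Hx) as (Hu & Hu1 & Hv & Hv1 & E1 & E2).
pose proof (sh_pos x Hx) as Hs. pose proof (ch_sh x) as Hc.
rewrite (P_eq x) in E1, E2 by lra.
unfold Gf, Mf, qf.
dsolve. all: qalg x Hx. all: try lra. all: try (apply Rgt_not_eq; apply Rlt_gt; nra).
rewrite E1. field_simplify; [|lra..]. rewrite Hc. field. lra.
Qed.

Lemma gm_der3 a b u v u1 v1 u2 v2 : Hy a b u v u1 v1 u2 v2 -> forall x, 0 < x ->
  is_derive (Mf v v1) x (- (a * Gf v x + b * Gf u x) / sinh x).
Proof.
intros H x Hx. destruct (H x Hx) as (Hu & Hu1 & Hv & Hv1 & E1 & E2).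
pose proof (sh_pos x Hx) as Hs. pose proof (ch_sh x) as Hc.
rewrite (P_eq x) in E1, E2 by lra.
unfold Gf, Mf, qf.
dsolve. all: qalg x Hx. all: try lra. all: try (apply Rgt_not_eq; apply Rlt_gt; nra).
rewrite E2. field_simplify; [|lra..]. rewrite Hc. field. lra.
Qed.


Lemma lip (f df h dh : R -> R) x' x : x' <= x ->
  (forall t, x' <= t <= x -> is_derive f t (df t) /\ is_derive h t (dh t) /\ Rabs (df t) <= dh t) ->
  Rabs (f x - f x') <= h x - h x'.
Proof.
intros Hle H.
assert (A1 : h x' - f x' <= h x - f x).
{ apply (incr (fun t => h t - f t) (fun t => dh t - df t)); auto.
  - intros t Ht. destruct (H t Ht) as (H1 & H2 & _). auto_derive.
    + split; [exists (dh t); auto|split; [exists (df t); auto|auto]].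
    + rewrite (der_u h t _ H2), (der_u f t _ H1). ring.
  - intros t Ht. destruct (H t Ht) as (_ & _ & H3). apply Rabs_le_between in H3. lra. }
assert (A2 : h x' + f x' <= h x + f x).
{ apply (incr (fun t => h t + f t) (fun t => dh t + df t)); auto.
  - intros t Ht. destruct (H t Ht) as (H1 & H2 & _). auto_derive.
    + split; [exists (dh t); auto|split; [exists (df t); auto|auto]].
    + rewrite (der_u h t _ H2), (der_u f t _ H1). ring.
  - intros t Ht. destruct (H t Ht) as (_ & _ & H3). apply Rabs_le_between in H3. lra. }
apply Rabs_le_between. lra.
Qed.

Lemma RInt_sw (f : R -> R) p t : 0 < p -> 0 < t -> (forall y, 0 < y -> continuous f y) ->
  RInt f t p = - RInt f p t.
Proof.
intros Hp Ht Hc. rewrite <- (opp_RInt_swap f p t). reflexivity.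
apply ex_RInt_continuous. intros z Hz. apply Hc.
revert Hz. unfold Rmin, Rmax. destruct (Rle_dec p t); lra.
Qed.

Lemma RInt_pt (f : R -> R) p : RInt f p p = 0.
Proof. rewrite RInt_point. reflexivity. Qed.

Lemma sq_le_abs A B : 0 <= B -> A ^ 2 <= B ^ 2 -> Rabs A <= B.
Proof. intros. apply Rabs_le_between. split; nra. Qed.

Lemma core1 mr mi gr gi a b mu : 0 < mu -> mu ^ 2 = mr ^ 2 + mi ^ 2 + 1 ->
  mr * (a * gr - b * gi) + mi * (a * gi + b * gr) <= mu * (Rabs a + Rabs b) * (1 + gr ^ 2 + gi ^ 2) / 2.
Proof.
intros Hm Hmu.
set (T1 := mr * gr + mi * gi). set (T2 := mi * gr - mr * gi).
assert (Hid : T1 ^ 2 + T2 ^ 2 = (mr ^ 2 + mi ^ 2) * (gr ^ 2 + gi ^ 2)) by (unfold T1, T2; ring).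
set (G := gr ^ 2 + gi ^ 2) in *.
assert (HG : 0 <= G) by (unfold G; nra).
assert (HB : (T1 ^ 2 + T2 ^ 2) <= (mu * (1 + G) / 2) ^ 2).
{ rewrite Hid. assert (G <= ((1 + G) / 2) ^ 2) by (pose proof (pow2_ge_0 (1 - G)); nra).
  assert (mr ^ 2 + mi ^ 2 <= mu ^ 2) by lra. 
  replace ((mu * (1 + G) / 2) ^ 2) with (mu ^ 2 * ((1 + G) / 2) ^ 2) by field.
  apply Rle_trans with (mu ^ 2 * G). apply Rmult_le_compat_r; lra.
  apply Rmult_le_compat_l; nra. }
assert (H1 : Rabs T1 <= mu * (1 + G) / 2) by (apply sq_le_abs; nra).
assert (H2 : Rabs T2 <= mu * (1 + G) / 2) by (apply sq_le_abs; nra).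
replace (mr * (a * gr - b * gi) + mi * (a * gi + b * gr)) with (a * T1 + b * T2) by (unfold T1, T2; ring).
assert (a * T1 <= Rabs a * Rabs T1).
{ rewrite <- Rabs_mult. apply Rle_abs. }
assert (b * T2 <= Rabs b * Rabs T2).
{ rewrite <- Rabs_mult. apply Rle_abs. }
pose proof (Rabs_pos a). pose proof (Rabs_pos b).
assert (Rabs a * Rabs T1 <= Rabs a * (mu * (1 + G) / 2)) by (apply Rmult_le_compat_l; auto).
assert (Rabs b * Rabs T2 <= Rabs b * (mu * (1 + G) / 2)) by (apply Rmult_le_compat_l; auto).
unfold G in *. lra.
Qed.


Definition L2b (u v : R -> R) M := forall lo hi, 0 < lo -> lo <= hi -> RInt (Rf u v) lo hi <= M.
Definition muf (u v u1 v1 : R -> R) t := sqrt (Mf u u1 t ^ 2 + Mf v v1 t ^ 2 + 1).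

Lemma Rcont a b u v u1 v1 u2 v2 : Hy a b u v u1 v1 u2 v2 -> forall y, 0 < y -> continuous (Rf u v) y.
Proof. intros H y Hy. apply (@ex_derive_continuous R_AbsRing R_NormedModule). exists (Df u v u1 v1 y). apply (derivs a b u v u1 v1 u2 v2 H y Hy). Qed.

Lemma R_G u v y : 0 < y -> Rf u v y = (Gf u y ^ 2 + Gf v y ^ 2) / sinh y.
Proof. intros Hy. destruct (qf_facts y Hy) as [H0 H1]. unfold Rf, Gf. rewrite <- H1. field. lra. Qed.

Lemma div_aux N s mu B : 0 < s -> 0 < mu -> N <= mu * B -> N / (s * mu) <= B / s.
Proof.
intros Hs Hm HN. unfold Rdiv. rewrite Rinv_mult.
replace (N * (/ s * / mu)) with ((N * / mu) * / s) by ring.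
apply Rmult_le_compat_r. left; apply Rinv_0_lt_compat; auto.
replace B with (mu * B * / mu) by (field; lra).
apply Rmult_le_compat_r; [left; apply Rinv_0_lt_compat; auto| auto].
Qed.

Lemma muf_pos u v u1 v1 t : 0 < muf u v u1 v1 t /\ muf u v u1 v1 t ^ 2 = Mf u u1 t ^ 2 + Mf v v1 t ^ 2 + 1.
Proof. unfold muf. split. apply sqrt_lt_R0. nra. rewrite <- Rsqr_pow2. apply Rsqr_sqrt. nra. Qed.

Lemma stepA a b u v u1 v1 u2 v2 M : Hy a b u v u1 v1 u2 v2 -> L2b u v M ->
  forall x, 0 < x <= /2 -> muf u v u1 v1 x <= muf u v u1 v1 (/2) + (Rabs a + Rabs b) / 2 * (/2 / x + M).
Proof.
intros H HM x Hx.
set (L := Rabs a + Rabs b).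
assert (HL : 0 <= L) by (unfold L; pose proof (Rabs_pos a); pose proof (Rabs_pos b); lra).
pose proof (Rcont _ _ _ _ _ _ _ _ H) as Hc.
set (I := fun t => RInt (Rf u v) (/2) t).
assert (HI : forall t, 0 < t -> is_derive I t (Rf u v t)) by (intros t Ht; apply prim; auto; lra).
assert (HIx : I x >= - M).
{ unfold I; cbv beta. rewrite (RInt_sw _ x (/2)); try lra; auto. pose proof (HM x (/2)). lra. }
assert (HI0 : I (/2) = 0) by apply RInt_pt.
clearbody I.
set (F := fun t => muf u v u1 v1 t - L / 2 * (/2 / t) + L / 2 * I t).
assert (HF : F x <= F (/2)).
{ apply (incr F (fun t => (Mf u u1 t * (- (a * Gf u t - b * Gf v t) / sinh t) +
                           Mf v v1 t * (- (a * Gf v t + b * Gf u t) / sinh t)) / muf u v u1 v1 t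
                          + L / 2 * (/2 / t ^ 2) + L / 2 * Rf u v t)); [lra| |].
  - intros t Ht. assert (Ht0 : 0 < t) by lra.
    pose proof (gm_der2 _ _ _ _ _ _ _ _ H t Ht0). pose proof (gm_der3 _ _ _ _ _ _ _ _ H t Ht0).
    pose proof (HI t Ht0). unfold F, muf. dsolve.
    + nra.
    + lra.
    + destruct (muf_pos u v u1 v1 t) as [Hm _]. unfold muf in Hm. replace (Mf u u1 t * (Mf u u1 t * 1) + Mf v v1 t * (Mf v v1 t * 1) + 1) with (Mf u u1 t ^ 2 + Mf v v1 t ^ 2 + 1) by ring. pose proof (sh_pos t Ht0). field. repeat split; lra.
  - intros t Ht. assert (Ht0 : 0 < t) by lra.
    destruct (muf_pos u v u1 v1 t) as [Hm Hm2].
    pose proof (sh_pos t Ht0) as Hs. pose proof (sh_ge t (Rlt_le _ _ Ht0)) as Hs2.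
    pose proof (core1 (Mf u u1 t) (Mf v v1 t) (Gf u t) (Gf v t) a b _ Hm Hm2) as Hcore.
    fold L in Hcore.
    set (N := Mf u u1 t * (a * Gf u t - b * Gf v t) + Mf v v1 t * (a * Gf v t + b * Gf u t)) in *.
    replace ((Mf u u1 t * (- (a * Gf u t - b * Gf v t) / sinh t) +
              Mf v v1 t * (- (a * Gf v t + b * Gf u t) / sinh t)) / muf u v u1 v1 t)
      with (- (N / (sinh t * muf u v u1 v1 t))) by (unfold N; field; lra).
    assert (Hd := div_aux N (sinh t) (muf u v u1 v1 t) (L * (1 + Gf u t ^ 2 + Gf v t ^ 2) / 2) Hs Hm).
    rewrite R_G by lra.
    assert (Hk : / sinh t <= /2 / t ^ 2).
    { apply Rle_trans with (/ t). apply Rinv_le_contravar; lra.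
      replace (/2 / t ^ 2) with (/ t * (/2 / t)) by (field; lra).
      rewrite <- (Rmult_1_r (/ t)) at 1. apply Rmult_le_compat_l. left; apply Rinv_0_lt_compat; lra.
      apply Rle_div_r; lra. }
    assert (Hd' : N / (sinh t * muf u v u1 v1 t) <= L * (1 + Gf u t ^ 2 + Gf v t ^ 2) / 2 / sinh t).
    { apply Hd. lra. }
    replace (L * (1 + Gf u t ^ 2 + Gf v t ^ 2) / 2 / sinh t) with
      (L / 2 * / sinh t + L / 2 * ((Gf u t ^ 2 + Gf v t ^ 2) / sinh t)) in Hd' by (field; lra).
    assert (L / 2 * / sinh t <= L / 2 * (/2 / t ^ 2)) by (apply Rmult_le_compat_l; lra).
    lra. }
unfold F in HF. rewrite HI0 in HF.
assert (/2 / (/2) = 1) by field.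
assert (L / 2 * I x >= L / 2 * - M) by (apply Rmult_ge_compat_l; lra).
nra.
Qed.


Lemma combine (f g h : R -> R) x :
  (forall d, 0 < d -> exists x', 0 < x' <= x /\ f x' ^ 2 + g x' ^ 2 <= d) ->
  (forall x', 0 < x' <= x -> Rabs (f x - f x') <= h x - h x' /\ 0 <= h x') ->
  Rabs (f x) <= h x.
Proof.
intros Hd Hl. apply le_eps. intros e He.
destruct (Hd (e ^ 2)) as [x' [Hx' Hs]]; [nra|].
destruct (Hl x' Hx') as [H1 H2].
assert (Rabs (f x') <= e) by (apply sq_le_abs; nra).
pose proof (Rabs_triang (f x - f x') (f x')) as Ht. replace (f x - f x' + f x') with (f x) in Ht by ring.
lra.
Qed.

Lemma stepC a b u v u1 v1 u2 v2 M : Hy a b u v u1 v1 u2 v2 -> L2b u v M ->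
  forall d x, 0 < d -> 0 < x <= /2 -> exists x', 0 < x' <= x /\ Gf u x' ^ 2 + Gf v x' ^ 2 <= d.
Proof.
intros H HM d x Hd Hx.
destruct (Rle_dec 0 1) as [_|]; [|lra].
apply NNPP. intro Hn.
assert (Hall : forall y, 0 < y <= x -> d < Gf u y ^ 2 + Gf v y ^ 2).
{ intros y Hy. apply Rnot_le_lt. intro Hc. apply Hn. exists y. auto. }
set (K := 2 * (Rabs M + 1) / d).
set (y0 := x * exp (- K)).
assert (Hy0 : 0 < y0) by (unfold y0; pose proof (exp_pos (- K)); nra).
assert (HK : 0 < K) by (unfold K; pose proof (Rabs_pos M); apply Rdiv_lt_0_compat; lra).
assert (Hy0x : y0 <= x).
{ unfold y0. assert (exp (- K) <= 1). { rewrite <- exp_0. apply exp_le_exp. lra. } nra. }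
pose proof (Rcont _ _ _ _ _ _ _ _ H) as Hc.
assert (Hinc : RInt (Rf u v) y0 y0 - d / 2 * ln y0 <= RInt (Rf u v) y0 x - d / 2 * ln x).
{ apply (incr (fun t => RInt (Rf u v) y0 t - d / 2 * ln t) (fun t => Rf u v t - d / 2 * / t)); auto.
  - intros t Ht. assert (Ht0 : 0 < t) by lra. pose proof (prim (Rf u v) y0 t Hy0 Ht0 Hc) as Hp.
    set (I := fun t => RInt (Rf u v) y0 t) in *. clearbody I.
    dsolve. auto. field. lra.
  - intros t Ht. assert (Ht0 : 0 < t) by lra. rewrite R_G by lra.
    pose proof (sh_pos t Ht0). assert (Ht1 : 0 <= t <= 1) by lra. pose proof (sh_le t Ht1).
    assert (Hg := Hall t (conj Ht0 (proj2 Ht))).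
    enough (d / 2 * / t <= (Gf u t ^ 2 + Gf v t ^ 2) / sinh t) by lra.
    apply Rle_trans with (d / sinh t).
    + replace (d / 2 * / t) with (d / (2 * t)) by (field; lra). 
      apply Rmult_le_compat_l; [lra|]. apply Rinv_le_contravar; lra.
    + apply Rmult_le_compat_r; [left; apply Rinv_0_lt_compat; lra| lra]. }
rewrite RInt_pt in Hinc.
assert (Hln : ln y0 = ln x - K).
{ unfold y0. rewrite ln_mult; [|lra|apply exp_pos]. rewrite ln_exp. ring. }
rewrite Hln in Hinc.
pose proof (HM y0 x Hy0 Hy0x).
assert (d / 2 * K = Rabs M + 1) by (unfold K; field; lra).
pose proof (Rle_abs M). lra.
Qed.


Definition C3 a b (u v u1 v1 : R -> R) M := muf u v u1 v1 (/2) + (Rabs a + Rabs b) + (Rabs a + Rabs b) * Rabs M.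

Lemma abs_mf u v u1 v1 t : Rabs (Mf u u1 t) <= muf u v u1 v1 t /\ Rabs (Mf v v1 t) <= muf u v u1 v1 t.
Proof. destruct (muf_pos u v u1 v1 t) as [H1 H2]. split; apply sq_le_abs; nra. Qed.

Lemma smu_bound a b u v u1 v1 u2 v2 M : Hy a b u v u1 v1 u2 v2 -> L2b u v M ->
  forall t, 0 < t <= /2 -> sinh t * muf u v u1 v1 t <= C3 a b u v u1 v1 M.
Proof.
intros H HM t Ht. pose proof (stepA a b u v u1 v1 u2 v2 M H HM t Ht) as HA.
set (L := Rabs a + Rabs b) in *.
assert (HL : 0 <= L) by (unfold L; pose proof (Rabs_pos a); pose proof (Rabs_pos b); lra).
pose proof (sh_pos t (proj1 Ht)) as Hs. assert (Ht1 : 0 <= t <= 1) by lra. pose proof (sh_le t Ht1) as Hs2.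
destruct (muf_pos u v u1 v1 t) as [Hm _]. destruct (muf_pos u v u1 v1 (/2)) as [Hm2 _].
unfold C3. fold L.
set (m1 := muf u v u1 v1 (/2)) in *. set (m := muf u v u1 v1 t) in *.
apply Rle_trans with (sinh t * (m1 + L / 2 * (/ 2 / t + M))).
{ apply Rmult_le_compat_l; lra. }
assert (E1 : sinh t * (L / 2 * (/2 / t)) <= L / 2).
{ replace (sinh t * (L / 2 * (/2 / t))) with (L / 4 * (sinh t / t)) by (field; lra).
  assert (sinh t / t <= 2) by (apply Rle_div_l; lra). nra. }
assert (E2 : sinh t * M <= Rabs M).
{ pose proof (Rle_abs M). pose proof (Rabs_pos M). destruct (Rle_dec 0 M); nra. }
assert (E3 : sinh t * m1 <= m1) by nra.
assert (E4 : L / 2 * (sinh t * M) <= L / 2 * Rabs M) by (apply Rmult_le_compat_l; lra).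
assert (L / 2 * Rabs M <= L * Rabs M) by (pose proof (Rabs_pos M); nra).
nra.
Qed.

Lemma stepB a b u v u1 v1 u2 v2 M : Hy a b u v u1 v1 u2 v2 -> L2b u v M ->
  forall x, 0 < x <= /2 -> Rabs (Gf u x) <= C3 a b u v u1 v1 M * x /\ Rabs (Gf v x) <= C3 a b u v u1 v1 M * x.
Proof.
intros H HM x Hx. set (C := C3 a b u v u1 v1 M).
assert (HC : 0 <= C).
{ unfold C, C3. destruct (muf_pos u v u1 v1 (/2)) as [Hm _].
  pose proof (Rabs_pos a); pose proof (Rabs_pos b); pose proof (Rabs_pos M). nra. }
assert (Hd : forall x' t, x' <= t <= x -> 0 < x' ->
   Rabs (sinh t * Mf u u1 t) <= C /\ Rabs (sinh t * Mf v v1 t) <= C).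
{ intros x' t Ht Hx'. assert (Ht' : 0 < t <= /2) by lra.
  pose proof (smu_bound a b u v u1 v1 u2 v2 M H HM t Ht') as Hb. fold C in Hb.
  destruct (abs_mf u v u1 v1 t) as [A1 A2]. pose proof (sh_pos t (proj1 Ht')).
  rewrite !Rabs_mult, (Rabs_pos_eq (sinh t)) by lra. split; nra. }
split.
- apply (combine (Gf u) (Gf v) (fun t => C * t)).
  + intros d Hd0. apply (stepC a b u v u1 v1 u2 v2 M H HM d x Hd0 Hx).
  + intros x' Hx'. split; [|nra].
    apply (lip _ (fun t => sinh t * Mf u u1 t) _ (fun _ => C)); [lra|].
    intros t Ht. split; [apply (gm_der1 a b u v u1 v1 u2 v2 H t); lra|]. split.
    * auto_derive; auto. ring.
    * apply (Hd x'); lra.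
- apply (combine (Gf v) (Gf u) (fun t => C * t)).
  + intros d Hd0. destruct (stepC a b u v u1 v1 u2 v2 M H HM d x Hd0 Hx) as [y [Hy1 Hy2]].
    exists y. split; [auto|lra].
  + intros x' Hx'. split; [|nra].
    apply (lip _ (fun t => sinh t * Mf v v1 t) _ (fun _ => C)); [lra|].
    intros t Ht. split; [apply (gm_der1 a b u v u1 v1 u2 v2 H t); lra|]. split.
    * auto_derive; auto. ring.
    * apply (Hd x'); lra.
Qed.


Definition C4 a b (u v u1 v1 : R -> R) M :=
  Rabs (Mf u u1 (/2)) + Rabs (Mf v v1 (/2)) + (Rabs a + Rabs b) * C3 a b u v u1 v1 M.

Lemma C3_nonneg a b u v u1 v1 M : 0 <= C3 a b u v u1 v1 M.
Proof. unfold C3. destruct (muf_pos u v u1 v1 (/2)) as [Hm _].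
  pose proof (Rabs_pos a); pose proof (Rabs_pos b); pose proof (Rabs_pos M). nra. Qed.

Lemma tri p q K : Rabs (p - q) <= K -> Rabs q <= Rabs p + K.
Proof. intros H. apply Rabs_le_between in H. pose proof (Rle_abs p). pose proof (Rle_abs (- p)).
rewrite Rabs_Ropp in *. apply Rabs_le_between. lra. Qed.

Lemma stepD a b u v u1 v1 u2 v2 M : Hy a b u v u1 v1 u2 v2 -> L2b u v M ->
  forall x, 0 < x <= /2 -> Rabs (Mf u u1 x) <= C4 a b u v u1 v1 M /\ Rabs (Mf v v1 x) <= C4 a b u v u1 v1 M.
Proof.
intros H HM x Hx. set (C := C3 a b u v u1 v1 M). pose proof (C3_nonneg a b u v u1 v1 M) as HC. fold C in HC.
set (L := Rabs a + Rabs b).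
assert (HL : 0 <= L) by (unfold L; pose proof (Rabs_pos a); pose proof (Rabs_pos b); lra).
assert (Hd : forall t, x <= t <= /2 ->
   Rabs (- (a * Gf u t - b * Gf v t) / sinh t) <= L * C /\ Rabs (- (a * Gf v t + b * Gf u t) / sinh t) <= L * C).
{ intros t Ht. assert (Ht' : 0 < t <= /2) by lra.
  destruct (stepB a b u v u1 v1 u2 v2 M H HM t Ht') as [B1 B2]. fold C in B1, B2.
  pose proof (sh_pos t (proj1 Ht')) as Hs. pose proof (sh_ge t (Rlt_le _ _ (proj1 Ht'))) as Hs2.
  assert (K : forall p q : R, Rabs (- (p * Gf u t + q * Gf v t) / sinh t) <= (Rabs p + Rabs q) * C).
  { intros p q. unfold Rdiv. rewrite Rabs_mult, Rabs_Ropp, (Rabs_pos_eq (/ sinh t)) by (left; apply Rinv_0_lt_compat; lra).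
    pose proof (Rabs_triang (p * Gf u t) (q * Gf v t)). rewrite !Rabs_mult in H0.
    assert (Rabs p * Rabs (Gf u t) <= Rabs p * (C * t)) by (apply Rmult_le_compat_l; [apply Rabs_pos|auto]).
    assert (Rabs q * Rabs (Gf v t) <= Rabs q * (C * t)) by (apply Rmult_le_compat_l; [apply Rabs_pos|auto]).
    apply Rle_trans with ((Rabs p + Rabs q) * C * t * / sinh t).
    - apply Rmult_le_compat_r; [left; apply Rinv_0_lt_compat; lra|]. lra.
    - assert (t * / sinh t <= 1).
      { apply (Rmult_le_reg_r (sinh t)); auto. field_simplify; lra. }
      pose proof (Rabs_pos p); pose proof (Rabs_pos q).
      replace ((Rabs p + Rabs q) * C * t * / sinh t) with ((Rabs p + Rabs q) * C * (t * / sinh t)) by ring.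
      assert (0 <= (Rabs p + Rabs q) * C) by nra. nra. }
  split.
  - replace (a * Gf u t - b * Gf v t) with (a * Gf u t + (- b) * Gf v t) by ring.
    pose proof (K a (- b)). rewrite Rabs_Ropp in H0. auto.
  - replace (a * Gf v t + b * Gf u t) with (b * Gf u t + a * Gf v t) by ring.
    pose proof (K b a). unfold L. lra. }
unfold C4. fold C. fold L.
pose proof (Rabs_pos (Mf u u1 (/2))). pose proof (Rabs_pos (Mf v v1 (/2))).
assert (LC : L * C * (/2) - L * C * x <= L * C) by (assert (0 <= L * C) by nra; nra).
split.
- assert (Hl := lip (Mf u u1) (fun t => - (a * Gf u t - b * Gf v t) / sinh t) (fun t => L * C * t) (fun _ => L * C) x (/2) ltac:(lra)).
  assert (Rabs (Mf u u1 (/2) - Mf u u1 x) <= L * C * (/2) - L * C * x).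
  { apply Hl. intros t Ht. split; [apply (gm_der2 a b u v u1 v1 u2 v2 H t); lra|]. split.
    + auto_derive; auto. ring.
    + apply Hd; auto. }
  apply tri in H2. lra.
- assert (Hl := lip (Mf v v1) (fun t => - (a * Gf v t + b * Gf u t) / sinh t) (fun t => L * C * t) (fun _ => L * C) x (/2) ltac:(lra)).
  assert (Rabs (Mf v v1 (/2) - Mf v v1 x) <= L * C * (/2) - L * C * x).
  { apply Hl. intros t Ht. split; [apply (gm_der3 a b u v u1 v1 u2 v2 H t); lra|]. split.
    + auto_derive; auto. ring.
    + apply Hd; auto. }
  apply tri in H2. lra.
Qed.

Lemma C4_nonneg a b u v u1 v1 M : 0 <= C4 a b u v u1 v1 M.
Proof. unfold C4. pose proof (C3_nonneg a b u v u1 v1 M).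
  pose proof (Rabs_pos a); pose proof (Rabs_pos b); pose proof (Rabs_pos (Mf u u1 (/2))); pose proof (Rabs_pos (Mf v v1 (/2))). nra. Qed.

Lemma stepE a b u v u1 v1 u2 v2 M : Hy a b u v u1 v1 u2 v2 -> L2b u v M ->
  forall x, 0 < x <= /2 -> Rabs (Gf u x) <= C4 a b u v u1 v1 M * x ^ 2 /\ Rabs (Gf v x) <= C4 a b u v u1 v1 M * x ^ 2.
Proof.
intros H HM x Hx. set (C := C4 a b u v u1 v1 M). pose proof (C4_nonneg a b u v u1 v1 M) as HC. fold C in HC.
assert (Hd : forall x' t, x' <= t <= x -> 0 < x' ->
   Rabs (sinh t * Mf u u1 t) <= 2 * C * t /\ Rabs (sinh t * Mf v v1 t) <= 2 * C * t).
{ intros x' t Ht Hx'. assert (Ht' : 0 < t <= /2) by lra.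
  destruct (stepD a b u v u1 v1 u2 v2 M H HM t Ht') as [A1 A2]. fold C in A1, A2.
  pose proof (sh_pos t (proj1 Ht')). assert (Ht1 : 0 <= t <= 1) by lra. pose proof (sh_le t Ht1).
  rewrite !Rabs_mult, (Rabs_pos_eq (sinh t)) by lra.
  pose proof (Rabs_pos (Mf u u1 t)). pose proof (Rabs_pos (Mf v v1 t)). split; nra. }
split.
- apply (combine (Gf u) (Gf v) (fun t => C * t ^ 2)).
  + intros d Hd0. apply (stepC a b u v u1 v1 u2 v2 M H HM d x Hd0 Hx).
  + intros x' Hx'. split; [|nra].
    apply (lip _ (fun t => sinh t * Mf u u1 t) (fun t => C * t ^ 2) (fun t => 2 * C * t)); [lra|].
    intros t Ht. split; [apply (gm_der1 a b u v u1 v1 u2 v2 H t); lra|]. split.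
    * auto_derive; auto. ring.
    * apply (Hd x'); lra.
- apply (combine (Gf v) (Gf u) (fun t => C * t ^ 2)).
  + intros d Hd0. destruct (stepC a b u v u1 v1 u2 v2 M H HM d x Hd0 Hx) as [y [Hy1 Hy2]].
    exists y. split; [auto|lra].
  + intros x' Hx'. split; [|nra].
    apply (lip _ (fun t => sinh t * Mf v v1 t) (fun t => C * t ^ 2) (fun t => 2 * C * t)); [lra|].
    intros t Ht. split; [apply (gm_der1 a b u v u1 v1 u2 v2 H t); lra|]. split.
    * auto_derive; auto. ring.
    * apply (Hd x'); lra.
Qed.


Lemma divle A B s x : 0 <= A -> A <= B -> 0 < x -> x <= s -> A / s <= B / x.
Proof. intros. unfold Rdiv. apply Rmult_le_compat; try lra.
left; apply Rinv_0_lt_compat; lra. apply Rinv_le_contravar; lra. Qed.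

Lemma pt_bounds s q x ch G Mv C : 0 < x <= /2 -> x <= s <= 2 * x -> q * q = s -> 0 < q -> 0 <= ch <= 2 ->
  Rabs G <= C * x ^ 2 -> Rabs Mv <= C -> 0 <= C ->
  G ^ 2 / s <= C ^ 2 * x /\ (q * Mv - ch * G / (2 * q ^ 3)) ^ 2 <= 6 * C ^ 2 * x /\
  (1/4 + 3 / (4 * s ^ 2)) * (G ^ 2 / s) <= C ^ 2 * x.
Proof.
intros Hx Hs Hq Hq0 Hch HG HM HC.
assert (G2 : G ^ 2 <= C ^ 2 * x ^ 4).
{ rewrite <- (pow2_abs G). replace (C ^ 2 * x ^ 4) with ((C * x ^ 2) ^ 2) by ring.
  pose proof (Rabs_pos G). apply pow_incr; lra. }
assert (M2 : Mv ^ 2 <= C ^ 2).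
{ rewrite <- (pow2_abs Mv). pose proof (Rabs_pos Mv). apply pow_incr; lra. }
assert (HG0 : 0 <= G ^ 2) by apply pow2_ge_0.
assert (Hc2 : 0 <= C ^ 2) by apply pow2_ge_0.
assert (A1 : G ^ 2 / s <= C ^ 2 * x ^ 3).
{ apply Rle_trans with (C ^ 2 * x ^ 4 / x). apply divle; lra. right; field; lra. }
assert (x3 : x ^ 3 <= x) by nra.
assert (A1' : G ^ 2 / s <= C ^ 2 * x) by (apply Rle_trans with (C ^ 2 * x ^ 3); [auto| apply Rmult_le_compat_l; lra]).
split; [auto|split].
- assert (E : (q * Mv - ch * G / (2 * q ^ 3)) ^ 2 <= 2 * (s * Mv ^ 2) + ch ^ 2 * (G ^ 2 / (2 * s ^ 3))).
  { replace (2 * (s * Mv ^ 2) + ch ^ 2 * (G ^ 2 / (2 * s ^ 3))) with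
       (2 * (q * Mv) ^ 2 + 2 * (ch * G / (2 * q ^ 3)) ^ 2) by (rewrite <- Hq; field; lra).
    pose proof (pow2_ge_0 (q * Mv + ch * G / (2 * q ^ 3))). nra. }
  assert (E1 : s * Mv ^ 2 <= 2 * x * C ^ 2) by (apply Rmult_le_compat; try lra; apply pow2_ge_0).
  assert (E2 : G ^ 2 / (2 * s ^ 3) <= C ^ 2 * x ^ 4 / (2 * x ^ 3)).
  { assert (x ^ 3 <= s ^ 3) by (apply pow_incr; lra). assert (0 < x ^ 3) by (apply pow_lt; lra). apply divle; lra. }
  replace (C ^ 2 * x ^ 4 / (2 * x ^ 3)) with (C ^ 2 * x / 2) in E2 by (field; lra).
  assert (E3 : ch ^ 2 * (G ^ 2 / (2 * s ^ 3)) <= 4 * (C ^ 2 * x / 2)).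
  { assert (0 < 2 * s ^ 3) by (pose proof (pow_lt s 3); lra).
    assert (0 <= G ^ 2 / (2 * s ^ 3)) by (apply Rmult_le_pos; [auto| left; apply Rinv_0_lt_compat; auto]).
    assert (ch ^ 2 <= 4) by nra. apply Rmult_le_compat; auto; apply pow2_ge_0. }
  lra.
- assert (B1 : 3 / (4 * s ^ 2) * (G ^ 2 / s) <= 3 / 4 * (C ^ 2 * x)).
  { replace (3 / (4 * s ^ 2) * (G ^ 2 / s)) with (3 / 4 * (G ^ 2 / s ^ 3)) by (field; lra).
    apply Rmult_le_compat_l; [lra|].
    assert (x ^ 3 <= s ^ 3) by (apply pow_incr; lra). assert (0 < x ^ 3) by (apply pow_lt; lra).
    apply Rle_trans with (C ^ 2 * x ^ 4 / x ^ 3). apply divle; lra.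
    right; field; lra. }
  assert (B2 : 1/4 * (G ^ 2 / s) <= 1/4 * (C ^ 2 * x)) by (apply Rmult_le_compat_l; lra).
  lra.
Qed.

Lemma zero_lemma a b u v u1 v1 u2 v2 M : Hy a b u v u1 v1 u2 v2 -> L2b u v M ->
  forall x0 e, 0 < x0 -> 0 < e -> exists x, 0 < x < x0 /\
    Rabs (Jf u v u1 v1 x) <= e /\ Rabs (Ef a u v u1 v1 x) <= e.
Proof.
intros H HM x0 e Hx0 He.
set (C := C4 a b u v u1 v1 M). pose proof (C4_nonneg a b u v u1 v1 M) as HC. fold C in HC.
set (K := (14 + 2 * Rabs a) * C ^ 2 + 1).
assert (HK : 1 <= K) by (unfold K; pose proof (Rabs_pos a); pose proof (pow2_ge_0 C); nra).
set (x := Rmin (x0 / 2) (Rmin (/2) (e / K))).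
assert (Hx1 : x <= x0 / 2) by apply Rmin_l.
assert (Hx2 : x <= /2) by (apply Rle_trans with (Rmin (/2) (e / K)); [apply Rmin_r|apply Rmin_l]).
assert (Hx3 : x <= e / K) by (apply Rle_trans with (Rmin (/2) (e / K)); [apply Rmin_r|apply Rmin_r]).
assert (Hx0' : 0 < x).
{ unfold x. apply Rmin_case; [lra|]. apply Rmin_case; [lra|]. apply Rdiv_lt_0_compat; lra. }
assert (HKx : K * x <= e).
{ apply Rle_trans with (K * (e / K)). apply Rmult_le_compat_l; lra. right; field; lra. }
exists x. split; [lra|].
assert (Hx : 0 < x <= /2) by lra.
destruct (stepD a b u v u1 v1 u2 v2 M H HM x Hx) as [D1 D2].
destruct (stepE a b u v u1 v1 u2 v2 M H HM x Hx) as [E1 E2]. fold C in D1, D2, E1, E2.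
destruct (qf_facts x Hx0') as [Hq0 Hq].
pose proof (sh_pos x Hx0') as Hs. pose proof (sh_ge x (Rlt_le _ _ Hx0')) as Hs1.
assert (Hx1' : 0 <= x <= 1) by lra. pose proof (sh_le x Hx1') as Hs2.
pose proof (ch_ge1 x) as Hc1. pose proof (ch_le2 x Hx1') as Hc2.
assert (Hsx : x <= sinh x <= 2 * x) by lra. assert (Hch : 0 <= cosh x <= 2) by lra.
destruct (pt_bounds (sinh x) (qf x) x (cosh x) (Gf u x) (Mf u u1 x) C Hx Hsx Hq Hq0 Hch E1 D1 HC) as (U1 & U2 & U3).
destruct (pt_bounds (sinh x) (qf x) x (cosh x) (Gf v x) (Mf v v1 x) C Hx Hsx Hq Hq0 Hch E2 D2 HC) as (V1 & V2 & V3).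
assert (Iu : u x ^ 2 = Gf u x ^ 2 / sinh x) by (unfold Gf; rewrite <- Hq; field; lra).
assert (Iv : v x ^ 2 = Gf v x ^ 2 / sinh x) by (unfold Gf; rewrite <- Hq; field; lra).
assert (Iu1 : u1 x = qf x * Mf u u1 x - cosh x * Gf u x / (2 * qf x ^ 3)) by (unfold Mf, Gf; field; lra).
assert (Iv1 : v1 x = qf x * Mf v v1 x - cosh x * Gf v x / (2 * qf x ^ 3)) by (unfold Mf, Gf; field; lra).
assert (IJ : Jf u v u1 v1 x = Gf u x * Mf v v1 x - Gf v x * Mf u u1 x)
  by (unfold Jf, Mf, Gf; field; lra).
split.
- rewrite IJ. 
  assert (Rabs (Gf u x * Mf v v1 x) <= C * x ^ 2 * C) by (rewrite Rabs_mult; apply Rmult_le_compat; auto; apply Rabs_pos).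
  assert (Rabs (Gf v x * Mf u u1 x) <= C * x ^ 2 * C) by (rewrite Rabs_mult; apply Rmult_le_compat; auto; apply Rabs_pos).
  pose proof (Rabs_triang (Gf u x * Mf v v1 x) (- (Gf v x * Mf u u1 x))). rewrite Rabs_Ropp in H2.
  assert (x ^ 2 <= x) by nra.
  assert (C * x ^ 2 * C <= C ^ 2 * x) by (pose proof (pow2_ge_0 C); nra).
  assert ((2 * C ^ 2) * x <= K * x) by (apply Rmult_le_compat_r; [lra|]; unfold K; pose proof (Rabs_pos a); pose proof (pow2_ge_0 C); nra).
  unfold Rminus. lra.
- unfold Ef. rewrite (P_eq x) by lra.
  rewrite <- Iu1, <- Iv1 in *. rewrite <- Iu in U1, U3. rewrite <- Iv in V1, V3.
  assert (0 <= u x ^ 2 + v x ^ 2) by (pose proof (pow2_ge_0 (u x)); pose proof (pow2_ge_0 (v x)); lra).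
  assert (Rabs (a * (u x ^ 2 + v x ^ 2)) <= Rabs a * (2 * C ^ 2 * x)).
  { rewrite Rabs_mult, (Rabs_pos_eq (u x ^ 2 + v x ^ 2)) by auto. apply Rmult_le_compat_l; [apply Rabs_pos|lra]. }
  apply Rabs_le_between in H1.
  pose proof (pow2_ge_0 (u1 x)). pose proof (pow2_ge_0 (v1 x)).
  assert (0 <= (1/4 + 3 / (4 * sinh x ^ 2)) * (u x ^ 2)).
  { apply Rmult_le_pos; [|apply pow2_ge_0]. assert (0 < 4 * sinh x ^ 2) by nra.
    assert (0 <= 3 / (4 * sinh x ^ 2)) by (apply Rlt_le, Rdiv_lt_0_compat; lra). lra. }
  assert (0 <= (1/4 + 3 / (4 * sinh x ^ 2)) * (v x ^ 2)).
  { apply Rmult_le_pos; [|apply pow2_ge_0]. assert (0 < 4 * sinh x ^ 2) by nra.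
    assert (0 <= 3 / (4 * sinh x ^ 2)) by (apply Rlt_le, Rdiv_lt_0_compat; lra). lra. }
  assert (Kx : (14 + 2 * Rabs a) * C ^ 2 * x <= K * x) by (apply Rmult_le_compat_r; [lra|unfold K; lra]).
  apply Rabs_le_between. split; nra.
Qed.


Lemma inf_end (Rr D D2 : R -> R) x1 e K M : 0 < x1 -> 0 < e -> 0 <= K ->
  (forall y, 0 < y -> continuous Rr y) ->
  (forall t, x1 <= t -> is_derive Rr t (D t) /\ is_derive D t (D2 t) /\ 0 <= Rr t /\ e - K * Rr t <= D2 t / 2) ->
  (forall X, x1 <= X -> RInt Rr x1 X <= M) -> False.
Proof.
intros Hx1 He HK Hc Hd HM.
set (I := fun t => RInt Rr x1 t) in *.
assert (HI : forall t, 0 < t -> is_derive I t (Rr t)) by (intros t Ht; apply prim; auto).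
assert (HI0 : I x1 = 0) by apply RInt_pt.
clearbody I.
assert (S1 : forall X, x1 <= X -> D x1 + 2 * e * (X - x1) - 2 * K * M <= D X).
{ intros X HX.
  assert (Hq : D x1 / 2 - e * x1 + K * I x1 <= D X / 2 - e * X + K * I X).
  { apply (incr (fun t => D t / 2 - e * t + K * I t) (fun t => D2 t / 2 - e + K * Rr t)); auto.
    - intros t Ht. destruct (Hd t (proj1 Ht)) as (H1 & H2 & _). pose proof (HI t ltac:(lra)).
      dsolve. field.
    - intros t Ht. destruct (Hd t (proj1 Ht)) as (_ & _ & _ & H4). lra. }
  rewrite HI0 in Hq. pose proof (HM X HX). assert (K * I X <= K * M) by (apply Rmult_le_compat_l; auto). lra. }
set (X0 := x1 + (Rabs (D x1) + 2 * K * Rabs M + 2) / (2 * e)).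
assert (HX0 : x1 <= X0).
{ unfold X0. assert (0 <= (Rabs (D x1) + 2 * K * Rabs M + 2) / (2 * e)); [|lra].
  apply Rlt_le, Rdiv_lt_0_compat; [|lra]. pose proof (Rabs_pos (D x1)); pose proof (Rabs_pos M). nra. }
assert (S1' : forall X, X0 <= X -> 2 <= D X).
{ intros X HX. pose proof (S1 X ltac:(lra)).
  assert (2 * e * (X - x1) >= Rabs (D x1) + 2 * K * Rabs M + 2).
  { assert (2 * e * (X0 - x1) = Rabs (D x1) + 2 * K * Rabs M + 2) by (unfold X0; field; lra). nra. }
  pose proof (Rle_abs (- D x1)). rewrite Rabs_Ropp in H1. pose proof (Rle_abs M).
  assert (K * M <= K * Rabs M) by (apply Rmult_le_compat_l; auto). lra. }
assert (S2 : forall X, X0 <= X -> 2 * (X - X0) <= Rr X).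
{ intros X HX. assert (Rr X0 - 2 * X0 <= Rr X - 2 * X).
  { apply (incr (fun t => Rr t - 2 * t) (fun t => D t - 2)); auto.
    - intros t Ht. destruct (Hd t ltac:(lra)) as (H1 & _). dsolve. ring.
    - intros t Ht. pose proof (S1' t ltac:(lra)). lra. }
  destruct (Hd X0 HX0) as (_ & _ & H3 & _). lra. }
assert (S3 : 0 <= I (X0 + 1)).
{ rewrite <- HI0. apply (incr I Rr); [lra| |].
  - intros t Ht. apply HI. lra.
  - intros t Ht. destruct (Hd t ltac:(lra)) as (_ & _ & H3 & _). auto. }
set (T := X0 + 2 + Rabs M).
assert (S4 : I (X0 + 1) - (X0 + 1) <= I T - T).
{ apply (incr (fun t => I t - t) (fun t => Rr t - 1)); [unfold T; pose proof (Rabs_pos M); lra| |].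
  - intros t Ht. pose proof (HI t ltac:(lra)). dsolve. ring.
  - intros t Ht. pose proof (S2 t ltac:(lra)). lra. }
pose proof (HM T ltac:(unfold T; pose proof (Rabs_pos M); lra)).
pose proof (Rle_abs M). unfold T in *. lra.
Qed.


Lemma deriv_zero (f : R -> R) x l : 0 < x -> (forall y, 0 < y -> f y = 0) -> is_derive f x l -> l = 0.
Proof.
intros Hx Hf Hd.
assert (Hd' : is_derive (fun _ : R => 0) x l).
{ apply (is_derive_ext_loc f); auto. exists (mkposreal x Hx). intros y Hy. apply Hf.
  unfold ball in Hy; simpl in Hy; unfold AbsRing_ball, abs, minus, plus, opp in Hy; simpl in Hy.
  apply Rabs_lt_between in Hy. lra. }
assert (Hc : is_derive (fun _ : R => 0) x 0) by (apply (@is_derive_const R_AbsRing R_NormedModule)).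
pose proof (is_derive_unique _ _ _ Hd'). pose proof (is_derive_unique _ _ _ Hc). congruence.
Qed.

Lemma get_L2 a b u v u1 v1 u2 v2 : Hy a b u v u1 v1 u2 v2 -> L2_pos u v -> exists M, L2b u v M.
Proof.
intros H [M HM]. exists M. intros lo hi Hlo Hle.
assert (Hex : ex_RInt (Rf u v) lo hi).
{ apply (@ex_RInt_continuous R_CompleteNormedModule). intros z Hz. apply (Rcont _ _ _ _ _ _ _ _ H).
  revert Hz. unfold Rmin, Rmax. destruct (Rle_dec lo hi); lra. }
pose proof (ex_RInt_Reals_0 _ _ _ Hex) as pr.
rewrite (RInt_Reals _ _ _ pr). apply HM; auto.
Qed.

Lemma main_thm a b u v u1 v1 u2 v2 : Hy a b u v u1 v1 u2 v2 -> L2_pos u v ->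
  forall x, 0 < x -> Rf u v x = 0.
Proof.
intros H HL. destruct (get_L2 _ _ _ _ _ _ _ _ H HL) as [M HM].
pose proof (derivs a b u v u1 v1 u2 v2 H) as Hd.
pose proof (Rcont _ _ _ _ _ _ _ _ H) as Hc.
pose proof (zero_lemma a b u v u1 v1 u2 v2 M H HM) as Z.
assert (Rpos : forall t, 0 <= Rf u v t) by (intros t; unfold Rf; pose proof (pow2_ge_0 (u t)); pose proof (pow2_ge_0 (v t)); lra).
assert (D2eq : forall t, D2f a u v u1 v1 t / 2 = u1 t ^ 2 + v1 t ^ 2 + (P t - a) * Rf u v t)
  by (intros t; unfold D2f, Rf; field).
assert (Pa : forall t, 0 < t -> - Rabs a * Rf u v t <= (P t - a) * Rf u v t).
{ intros t Ht. pose proof (P_pos t Ht). pose proof (Rle_abs a). pose proof (Rpos t).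
  assert (- Rabs a <= P t - a) by lra. apply Rmult_le_compat_r; auto. }
destruct (Req_dec b 0) as [Hb|Hb].
-
  set (E := Ef a u v u1 v1).
  assert (dEpos : forall t, 0 < t -> 0 <= 3 * cosh t / (2 * sinh t ^ 3) * Rf u v t).
  { intros t Ht. apply Rmult_le_pos; [|apply Rpos]. pose proof (sh_pos t Ht). pose proof (ch_ge1 t).
    apply Rlt_le, Rdiv_lt_0_compat; [lra|]. assert (0 < sinh t ^ 3) by (apply pow_lt; lra). lra. }
  assert (Emon : forall p q, 0 < p -> p <= q -> E p <= E q).
  { intros p q Hp Hpq. apply (incr E (fun t => 3 * cosh t / (2 * sinh t ^ 3) * Rf u v t)); auto.
    - intros t Ht. apply (Hd t ltac:(lra)). auto.
    - intros t Ht. apply dEpos. lra. }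
  assert (Ele : forall x, 0 < x -> E x <= 0).
  { intros x Hx. apply Rnot_lt_le. intro Hpos.
    apply (inf_end (Rf u v) (Df u v u1 v1) (D2f a u v u1 v1) x (E x) (2 * Rabs a) M).
    - auto.
    - auto.
    - pose proof (Rabs_pos a). lra.
    - exact Hc.
    - intros t Ht. destruct (Hd t ltac:(lra)) as (H1 & H2 & _). split; [auto|split; [auto|split; [apply Rpos|]]].
      rewrite D2eq. pose proof (Emon x t Hx Ht). pose proof (Pa t ltac:(lra)).
      unfold E, Ef in *. fold (Rf u v t) in *. lra.
    - intros X HX. apply HM; auto. }
  assert (Ege : forall x, 0 < x -> 0 <= E x).
  { intros x Hx. apply le_eps. intros ep Hep. destruct (Z x ep Hx Hep) as [x' (Hx' & _ & HE)].
    pose proof (Emon x' x ltac:(lra) ltac:(lra)). apply Rabs_le_between in HE. fold E in HE. lra. }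
  intros x Hx.
  assert (Hz := deriv_zero E x _ Hx (fun y Hy => Rle_antisym _ _ (Ele y Hy) (Ege y Hy)) (proj2 (proj2 (proj2 (Hd x Hx))) Hb)).
  apply Rmult_integral in Hz. destruct Hz as [Hz|Hz]; auto.
  exfalso. pose proof (sh_pos x Hx). pose proof (ch_ge1 x).
  assert (0 < sinh x ^ 3) by (apply pow_lt; lra).
  assert (0 < 3 * cosh x / (2 * sinh x ^ 3)) by (apply Rdiv_lt_0_compat; lra). lra.
- (* non-real: Wronskian-type current *)
  set (Kf := fun t => b * Jf u v u1 v1 t).
  assert (HKd : forall t, 0 < t -> is_derive Kf t (- b ^ 2 * Rf u v t)).
  { intros t Ht. destruct (Hd t Ht) as (_ & _ & H3 & _). unfold Kf.
    auto_derive; [exists (- b * Rf u v t); auto|]. rewrite (der_u _ _ _ H3). ring. }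
  assert (Kmon : forall p q, 0 < p -> p <= q -> Kf q <= Kf p).
  { intros p q Hp Hpq.
    assert (- Kf p <= - Kf q); [|lra].
    apply (incr (fun t => - Kf t) (fun t => b ^ 2 * Rf u v t)); auto.
    - intros t Ht. pose proof (HKd t ltac:(lra)). auto_derive; [exists (- b ^ 2 * Rf u v t); auto|].
      rewrite (der_u _ _ _ H0). ring.
    - intros t Ht. pose proof (pow2_ge_0 b). pose proof (Rpos t). nra. }
  assert (Kle : forall x, 0 < x -> Kf x <= 0).
  { intros x Hx. apply le_eps. intros ep Hep.
    assert (Hb' : 0 < Rabs b) by (apply Rabs_pos_lt; auto).
    destruct (Z x (ep / Rabs b) Hx ltac:(apply Rdiv_lt_0_compat; lra)) as [x' (Hx' & HJ & _)].
    pose proof (Kmon x' x ltac:(lra) ltac:(lra)).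
    assert (Kf x' <= ep).
    { unfold Kf. apply Rle_trans with (Rabs (b * Jf u v u1 v1 x')). apply Rle_abs.
      rewrite Rabs_mult. apply Rle_trans with (Rabs b * (ep / Rabs b)).
      apply Rmult_le_compat_l; [apply Rabs_pos|auto]. right; field; lra. }
    lra. }
  assert (Kge : forall x, 0 < x -> 0 <= Kf x).
  { intros x Hx. apply Rnot_lt_le. intro Hneg.
    assert (Hb' : 0 < Rabs b) by (apply Rabs_pos_lt; auto).
    set (c := - Kf x / Rabs b).
    assert (Hc0 : 0 < c) by (apply Rdiv_lt_0_compat; lra).
    apply (inf_end (Rf u v) (Df u v u1 v1) (D2f a u v u1 v1) x (2 * c) (1 + Rabs a) M).
    - auto.
    - lra.
    - pose proof (Rabs_pos a). lra.
    - exact Hc.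
    - intros t Ht. destruct (Hd t ltac:(lra)) as (H1 & H2 & _). split; [auto|split; [auto|split; [apply Rpos|]]].
      rewrite D2eq. pose proof (Kmon x t Hx Ht) as Hk. pose proof (Pa t ltac:(lra)).
      assert (HJ : c <= Rabs (Jf u v u1 v1 t)).
      { unfold c. apply (Rmult_le_reg_l (Rabs b)); auto. rewrite <- Rabs_mult.
        replace (Rabs b * (- Kf x / Rabs b)) with (- Kf x) by (field; lra).
        apply Rle_trans with (- (b * Jf u v u1 v1 t)). unfold Kf in *. cbv beta in *. lra.
        rewrite <- Rabs_Ropp. apply Rle_abs. }
      assert (HJ2 : c ^ 2 <= Jf u v u1 v1 t ^ 2).
      { rewrite <- (pow2_abs (Jf u v u1 v1 t)). apply pow_incr. lra. }
      assert (Lag : Jf u v u1 v1 t ^ 2 <= Rf u v t * (u1 t ^ 2 + v1 t ^ 2)).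
      { unfold Jf, Rf. pose proof (pow2_ge_0 (u t * u1 t + v t * v1 t)). nra. }
      assert (HW : 2 * c <= u1 t ^ 2 + v1 t ^ 2 + Rf u v t).
      { set (W := u1 t ^ 2 + v1 t ^ 2) in *. pose proof (Rpos t).
        assert (0 <= W) by (unfold W; pose proof (pow2_ge_0 (u1 t)); pose proof (pow2_ge_0 (v1 t)); lra).
        pose proof (pow2_ge_0 (W - Rf u v t)). nra. }
      lra.
    - intros X HX. apply HM; auto. }
  intros x Hx.
  assert (Hz := deriv_zero Kf x _ Hx (fun y Hy => Rle_antisym _ _ (Kle y Hy) (Kge y Hy)) (HKd x Hx)).
  assert (0 < b ^ 2) by (apply pow2_gt_0; auto).
  apply Rmult_integral in Hz. destruct Hz as [Hz|Hz]; auto. lra.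
Qed.


Theorem theoremA1 :
  forall (a b : R) (u v u1 v1 u2 v2 : R -> R),
    (forall x, 0 < x ->
       derivable_pt_lim u x (u1 x) /\ derivable_pt_lim u1 x (u2 x) /\
       derivable_pt_lim v x (v1 x) /\ derivable_pt_lim v1 x (v2 x) /\
       - u2 x + P x * u x = a * u x - b * v x /\
       - v2 x + P x * v x = a * v x + b * u x) ->
    L2_pos u v ->
    forall x, 0 < x -> u x = 0 /\ v x = 0.
Proof.
intros a b u v u1 v1 u2 v2 H HL x Hx.
assert (Hy' : Hy a b u v u1 v1 u2 v2).
{ intros y Hy0. destruct (H y Hy0) as (H1 & H2 & H3 & H4 & H5 & H6).
  split; [apply is_derive_Reals; auto|]. split; [apply is_derive_Reals; auto|].
  split; [apply is_derive_Reals; auto|]. split; [apply is_derive_Reals; auto|]. split; lra. }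
pose proof (main_thm a b u v u1 v1 u2 v2 Hy' HL x Hx) as HR. unfold Rf in HR.
pose proof (pow2_ge_0 (u x)). pose proof (pow2_ge_0 (v x)).
split; nra.
Qed.
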